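(* Let $S=\{0,1,2,\dots\}$, $\lambda,\mu>0$, $\theta=\lambda/\mu$, and let $X$ be the continuous-time Markov chain on $S$ with rates $q(i,i+1)=\lambda$; $q(i,i-k)=\mu$ for $i\ge1$, $1\le k\le i$; $q(i,i)=-(\lambda+i\mu)$; all other off-diagonal rates $0$. Let $\tau$ be a probability on $S$, $\mathbf P^{(\tau)}$ the law of $X$ with initial distribution $\tau$, $F^{(\tau)}_{X(t)}(x)=\mathbf P^{(\tau)}\{X(t)\le x\}$, $T(x)=\sum_{n\le x}\tau(n)$, and $\Pi^*(x)=\sum_{n\le x}\pi^*(n)$ with $\pi^*(n)=\theta^n(n+1)/(\theta+1)_{n+1}$. Then for every $t\ge0$, $$\sup_{x\in\mathbb R}|\Pi^*(x)-F^{(\tau)}_{X(t)}(x)|\le\sup_{x\in\mathbb R}|\Pi^*(x)-T(x)|\cdot\exp\{-\mu t-\theta(e^{-\mu t}+\mu t-1)\}.$$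
   Context: $(a)_n$ denotes the rising factorial $a(a+1)\cdots(a+n-1)$, $(a)_0=1$. *)

(* Defs.v *)
From Stdlib Require Import Reals Lra.
From Coquelicot Require Import Coquelicot.
Open Scope R_scope.

Fixpoint rising (a : R) (n : nat) : R :=
  match n with
  | O => 1
  | S m => rising a m * (a + INR m)
  end.

Definition qrate (lam mu : R) (i j : nat) : R :=
  if Nat.eqb j (S i) then lam
  else if Nat.eqb j i then - (lam + INR i * mu)
  else if Nat.ltb j i then mu
  else 0.

Definition pistar (theta : R) (n : nat) : R :=
  theta ^ n * INR (S n) / rising (theta + 1) (S n).

Definition cdf (p : nat -> R) (x : R) : R :=
  Series (fun n => if Rle_dec (INR n) x then p n else 0).

(* p : R -> nat -> R is the family of one-dimensional marginal laws
   P^(tau){X(t) = j} of the chain with Q-matrix qrate lam mu and initial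
   law tau: a family of probability vectors, starting at tau, right
   continuous at 0 and satisfying the Kolmogorov forward equations. *)
Definition is_marginal_law (lam mu : R) (tau : nat -> R) (p : R -> nat -> R) : Prop :=
  (forall j, p 0 j = tau j) /\
  (forall t j, 0 <= t -> 0 <= p t j) /\
  (forall t, 0 <= t -> is_series (p t) 1) /\
  (forall j, filterlim (fun s => p s j) (at_right 0) (locally (tau j))) /\
  (forall t j, 0 < t ->
     is_derive (fun s => p s j) t (Series (fun i => p t i * qrate lam mu i j))).

Definition sup_dist (F G : R -> R) : Rbar :=
  Lub_Rbar (fun y => exists x : R, y = Rabs (F x - G x)).

(* Main.v *)
Require Import Defs.
From Stdlib Require Import Reals Lra Lia.
From Coquelicot Require Import Coquelicot.
Open Scope R_scope.

Lemma sum_ext (a b : nat -> R) n : (forall k, (k <= n)%nat -> a k = b k) -> sum_f_R0 a n = sum_f_R0 b n.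
Proof. induction n; intros H; simpl; rewrite H; auto; rewrite IHn; auto. Qed.

Lemma sum_zero n : sum_f_R0 (fun _ : nat => 0) n = 0.
Proof. induction n; simpl; [ring| rewrite IHn; ring]. Qed.

Lemma is_series_zero : is_series (fun _ : nat => 0) 0.
Proof.
  unfold is_series. eapply filterlim_ext; [|apply filterlim_const].
  intros n; simpl. rewrite sum_n_Reals. rewrite sum_zero. reflexivity.
Qed.

Lemma series_finite (b : nat -> R) m :
  (forall n, (m < n)%nat -> b n = 0) -> Series b = sum_f_R0 b m.
Proof.
  intros H.
  assert (Hz: forall k, b (S m + k)%nat = 0) by (intros; apply H; lia).
  assert (ex_series b).
  { apply (ex_series_incr_n b (S m)). exists 0.
    eapply is_series_ext; [|apply is_series_zero]. intros k; simpl; symmetry; apply H; lia. }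
  rewrite (Series_incr_n b (S m)); [|lia|auto]. simpl.
  rewrite (Series_ext _ (fun _ => 0)); [|intros; apply Hz].
  rewrite (is_series_unique _ 0 is_series_zero). ring.
Qed.

Lemma cdf_neg a x : x < 0 -> cdf a x = 0.
Proof.
  intros Hx. unfold cdf. rewrite (Series_ext _ (fun _ => 0)).
  - apply is_series_unique, is_series_zero.
  - intros n. destruct (Rle_dec (INR n) x); auto. pose proof (pos_INR n). lra.
Qed.

Lemma cdf_nat a x m : INR m <= x < INR m + 1 -> cdf a x = sum_f_R0 a m.
Proof.
  intros Hx. unfold cdf. rewrite (series_finite _ m).
  - apply sum_ext. intros k Hk. destruct (Rle_dec (INR k) x) as [|n]; auto.
    exfalso; apply n. apply le_INR in Hk. lra.
  - intros n Hn. destruct (Rle_dec (INR n) x); auto. apply le_INR in Hn. rewrite S_INR in Hn. lra.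
Qed.


Lemma rising_pos a n : 0 < a -> 0 < rising a n.
Proof. intros Ha; induction n; simpl; [lra|]. pose proof (pos_INR n). apply Rmult_lt_0_compat; lra. Qed.

Lemma pistar_cum th m : 0 < th ->
  sum_f_R0 (pistar th) m = 1 - th ^ (S m) / rising (th + 1) (S m).
Proof.
  intros Hth. induction m.
  - simpl. unfold pistar. simpl. field. lra.
  - simpl sum_f_R0. rewrite IHm. unfold pistar.
    change (rising (th + 1) (S (S m))) with (rising (th+1) (S m) * (th + 1 + INR (S m))).
    assert (0 < rising (th+1) (S m)) by (apply rising_pos; lra).
    pose proof (pos_INR (S m)).
    rewrite !S_INR. rewrite S_INR in H0. simpl. field. assert (0 < rising (th+1) m) by (apply rising_pos; lra). pose proof (pos_INR m). split; lra.
Qed.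

Lemma pistar_stat lam mu m : 0 < lam -> 0 < mu ->
  lam * pistar (lam/mu) m = INR (S m) * mu * (1 - sum_f_R0 (pistar (lam/mu)) m).
Proof.
  intros Hl Hm. rewrite pistar_cum; [|apply Rdiv_lt_0_compat; lra].
  unfold pistar. simpl (_ ^ S m).
  assert (0 < rising (lam/mu + 1) (S m)) by (apply rising_pos; pose proof (Rdiv_lt_0_compat lam mu Hl Hm); lra).
  field. split; lra.
Qed.

Lemma qsum lam mu i m :
  sum_f_R0 (fun j => qrate lam mu i j) m =
  if Nat.ltb i m then 0 else if Nat.eqb i m then - lam else INR (S m) * mu.
Proof.
  induction m.
  - simpl. unfold qrate. destruct i; simpl; ring. 
  - simpl sum_f_R0. rewrite IHm. unfold qrate.
    destruct (Nat.ltb_spec i m); destruct (Nat.ltb_spec i (S m));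
    destruct (Nat.eqb_spec (S m) (S i)); destruct (Nat.eqb_spec (S m) i);
    destruct (Nat.eqb_spec i m); destruct (Nat.eqb_spec i (S m)); destruct (Nat.ltb_spec (S m) i);
    try lia; subst; rewrite ?S_INR; try ring.
Qed.


Lemma ex_shift_scal (q : nat -> R) c n : ex_series q -> ex_series (fun k => c * q (n + k)%nat).
Proof.
  intros H. apply (ex_series_incr_n q n) in H. apply (ex_series_scal_l c) in H. exact H.
Qed.

Lemma ex_col lam mu (q : nat -> R) j : ex_series q -> ex_series (fun i => q i * qrate lam mu i j).
Proof.
  intros H. apply (ex_series_incr_n _ (S j)).
  eapply ex_series_ext; [|apply (ex_shift_scal q mu (S j) H)].
  intros k. simpl. unfold qrate.
  destruct (Nat.eqb_spec j (S (S (j + k)))); [lia|].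
  destruct (Nat.eqb_spec j (S (j + k))); [lia|].
  destruct (Nat.ltb_spec j (S (j + k))); [|lia]. ring.
Qed.

Lemma series_sum (a : nat -> nat -> R) m : (forall j, ex_series (a j)) ->
  sum_f_R0 (fun j => Series (a j)) m = Series (fun i => sum_f_R0 (fun j => a j i) m)
  /\ ex_series (fun i => sum_f_R0 (fun j => a j i) m).
Proof.
  intros H. induction m.
  - simpl. split; auto.
  - destruct IHm as [E1 E2]. simpl. rewrite E1. split.
    + rewrite Series_plus; auto.
    + apply (ex_series_plus _ _ E2 (H (S m))).
Qed.

Lemma fwd_sum lam mu (q : nat -> R) m : is_series q 1 ->
  sum_f_R0 (fun j => Series (fun i => q i * qrate lam mu i j)) m
  = - lam * q m + INR (S m) * mu * (1 - sum_f_R0 q m).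
Proof.
  intros Hq. assert (Eq : ex_series q) by (exists 1; auto).
  destruct (series_sum (fun j i => q i * qrate lam mu i j) m) as [E1 E2].
  { intros j; apply ex_col; auto. }
  rewrite E1.
  rewrite (Series_ext _ (fun i => q i * (if Nat.ltb i m then 0 else if Nat.eqb i m then - lam else INR (S m) * mu))).
  2:{ intros i. rewrite <- qsum. clear. induction m; simpl; [ring|rewrite IHm; ring]. }
  assert (Ex : ex_series (fun i => q i * (if Nat.ltb i m then 0 else if Nat.eqb i m then - lam else INR (S m) * mu))).
  { apply (ex_series_incr_n _ (S m)).
    eapply ex_series_ext; [|apply (ex_shift_scal q (INR (S m) * mu) (S m) Eq)].
    intros k. destruct (Nat.ltb_spec (S m + k) m); [lia|]. destruct (Nat.eqb_spec (S m + k) m); [lia|]. apply Rmult_comm. }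
  rewrite (Series_incr_n _ (S m)); [|lia|auto].
  pose proof (is_series_unique _ _ Hq) as H1.
  rewrite (Series_incr_n q (S m)) in H1; [|lia|auto]. simpl Init.Nat.pred in *.
  rewrite (Series_ext _ (fun k => (INR (S m) * mu) * q (S m + k)%nat)).
  2:{ intros k. destruct (Nat.ltb_spec (S m + k) m); [lia|]. destruct (Nat.eqb_spec (S m + k) m); [lia|]. ring. }
  rewrite Series_scal_l.
  assert (sum_f_R0 (fun i => q i * (if Nat.ltb i m then 0 else if Nat.eqb i m then - lam else INR (S m) * mu)) m = - lam * q m).
  { destruct m.
    - simpl. ring.
    - simpl. rewrite (sum_ext _ (fun _ => 0)).
      + rewrite sum_zero. rewrite Nat.ltb_irrefl, Nat.eqb_refl. ring.
      + intros k Hk. destruct (Nat.ltb_spec k (S m)); [ring|lia]. }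
  rewrite H. rewrite <- H1. ring.
Qed.


Lemma rc_plus (f g : R -> R) a b : filterlim f (at_right 0) (locally a) ->
  filterlim g (at_right 0) (locally b) -> filterlim (fun x => f x + g x) (at_right 0) (locally (a + b)).
Proof. intros Hf Hg. eapply filterlim_comp_2; [exact Hf|exact Hg|]. apply (filterlim_plus a b). Qed.

Lemma rc_mult (f g : R -> R) a b : filterlim f (at_right 0) (locally a) ->
  filterlim g (at_right 0) (locally b) -> filterlim (fun x => f x * g x) (at_right 0) (locally (a * b)).
Proof. intros Hf Hg. eapply filterlim_comp_2; [exact Hf|exact Hg|]. apply (filterlim_mult a b). Qed.

Lemma rc_opp (f : R -> R) a : filterlim f (at_right 0) (locally a) ->
  filterlim (fun x => - f x) (at_right 0) (locally (- a)).
Proof. intros Hf. eapply filterlim_comp; [exact Hf|]. apply (filterlim_opp a). Qed.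

Lemma rc_cont (f : R -> R) : continuous f 0 -> filterlim f (at_right 0) (locally (f 0)).
Proof. intros H. eapply filterlim_filter_le_1; [apply filter_le_within|]. exact H. Qed.

Lemma rc_sum (p : R -> nat -> R) m : (forall j, filterlim (fun s => p s j) (at_right 0) (locally (p 0 j))) ->
  filterlim (fun s => sum_f_R0 (p s) m) (at_right 0) (locally (sum_f_R0 (p 0) m)).
Proof. intros H. induction m; simpl; [apply H|]. apply rc_plus; auto. Qed.

Lemma mono_seg (f : R -> R) a b : 0 < a <= b ->
  (forall s, 0 < s -> exists df, is_derive f s df /\ 0 <= df) -> f a <= f b.
Proof.
  intros Hab Hd.
  assert (Hex : forall s, 0 < s -> ex_derive f s) by (intros s Hs; destruct (Hd s Hs) as [df [H _]]; exists df; exact H).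
  destruct (MVT_gen f a b (Derive f)) as [c [Hc E]].
  - intros x Hx. apply Derive_correct. apply Hex. rewrite Rmin_left in Hx; lra.
  - intros x Hx. apply continuity_pt_filterlim. apply (ex_derive_continuous (K := R_AbsRing) (V := R_NormedModule)). apply Hex.
    rewrite Rmin_left in Hx; lra.
  - rewrite Rmin_left, Rmax_right in Hc by lra.
    destruct (Hd c ltac:(lra)) as [df [H1 H2]]. rewrite (is_derive_unique _ _ _ H1) in E.
    assert (0 <= df * (b - a)) by (apply Rmult_le_pos; lra). lra.
Qed.

Lemma mono0 (f : R -> R) t : 0 <= t ->
  (forall s, 0 < s -> exists df, is_derive f s df /\ 0 <= df) ->
  filterlim f (at_right 0) (locally (f 0)) -> f 0 <= f t.
Proof.
  intros Ht Hd Hc. destruct (Rle_lt_or_eq_dec 0 t Ht) as [Ht'|<-]; [|lra].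
  destruct (Rle_or_lt (f 0) (f t)) as [|Hlt]; auto. exfalso.
  assert (Hb := Hc (ball (f 0) (f 0 - f t)) (locally_ball (f 0) (mkposreal (f 0 - f t) ltac:(lra)))).
  destruct Hb as [del Hdel].
  set (s := Rmin (del/2) t).
  assert (Hs : 0 < s) by (unfold s; apply Rmin_case; [apply Rdiv_lt_0_compat; [apply cond_pos|lra]|lra]).
  assert (Hst : s <= t) by apply Rmin_r.
  assert (Hsd : s <= del/2) by apply Rmin_l.
  assert (B : ball (f 0) (f 0 - f t) (f s)).
  { apply Hdel; auto. unfold ball; simpl; unfold AbsRing_ball, abs, minus, plus, opp; simpl.
    rewrite Rabs_right; pose proof (cond_pos del); lra. }
  unfold ball in B; simpl in B; unfold AbsRing_ball, abs, minus, plus, opp in B; simpl in B.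
  apply Rabs_lt_between in B.
  pose proof (mono_seg f s t ltac:(lra) Hd). lra.
Qed.


Lemma is_derive_eq (f : R -> R) x (l l' : R) : is_derive f x l -> l = l' -> is_derive f x l'.
Proof. intros H ->; exact H. Qed.

Lemma d_ext (f g : R -> R) x l : (forall t, f t = g t) -> is_derive f x l -> is_derive g x l.
Proof. intros. apply (is_derive_ext f g x l); auto. Qed.

Lemma d_plus (f g : R -> R) x df dg : is_derive f x df -> is_derive g x dg ->
  is_derive (fun s => f s + g s) x (df + dg).
Proof. intros. apply (is_derive_plus f g x df dg); auto. Qed.

Lemma d_mult (f g : R -> R) x df dg : is_derive f x df -> is_derive g x dg ->
  is_derive (fun s => f s * g s) x (df * g x + f x * dg).
Proof. intros. apply (is_derive_mult f g x df dg); auto. intros; apply Rmult_comm. Qed.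

Lemma d_const (a : R) x : is_derive (fun _ => a) x 0.
Proof. apply (is_derive_const a x). Qed.

Lemma d_opp (f : R -> R) x df : is_derive f x df -> is_derive (fun s => - f s) x (- df).
Proof. intros H. apply (is_derive_opp f x df H). Qed.

Lemma d_expc c x : is_derive (fun s => exp (c * s)) x (c * exp (c * x)).
Proof. auto_derive; auto. ring. Qed.

Lemma deriv_sum (p : R -> nat -> R) (d : nat -> R) s m :
  (forall j, is_derive (fun s => p s j) s (d j)) ->
  is_derive (fun s => sum_f_R0 (p s) m) s (sum_f_R0 d m).
Proof.
  intros H. induction m; simpl; [apply H|]. apply d_plus; auto.
Qed.

Definition Pp m x := sum_f_R0 (fun k => x ^ k / INR (Factorial.fact k)) m.

Lemma Pp0 m : Pp m 0 = 1.
Proof.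
  unfold Pp. induction m; simpl; [field|]. rewrite IHm. unfold Rdiv; ring.
Qed.

Lemma Pp_deriv0 x : is_derive (Pp 0) x 0.
Proof. unfold Pp; simpl. apply (d_ext (fun _ => 1)); [intros; simpl; field|]. apply d_const. Qed.

Lemma d_term n x : is_derive (fun t => t^(S n) / INR (Factorial.fact (S n))) x (x^n / INR (Factorial.fact n)).
Proof.
  apply (d_ext (fun t => /INR (Factorial.fact (S n)) * t^(S n))); [intros; unfold Rdiv; ring|].
  eapply is_derive_eq; [apply is_derive_scal; apply (is_derive_pow (fun t => t) (S n) x 1); apply (is_derive_id (K := R_AbsRing))|].
  simpl pred. rewrite (fact_simpl n), mult_INR. pose proof (INR_fact_neq_0 n).
  assert (INR (S n) <> 0) by (rewrite S_INR; pose proof (pos_INR n); lra).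
  match goal with |- ?a = ?b => change (@eq R a b) end. field. auto.
Qed.

Lemma Pp_derivS m x : is_derive (Pp (S m)) x (Pp m x).
Proof.
  induction m.
  - unfold Pp; simpl. apply (d_ext (fun t => 1 + t)); [intros; simpl; field|].
    auto_derive; auto. field.
  - apply (d_ext (fun t => Pp (S m) t + t ^ (S (S m)) / INR (Factorial.fact (S (S m))))); [reflexivity|].
    eapply is_derive_eq; [apply d_plus; [apply IHm|apply d_term]|].
    reflexivity.
Qed.


Definition Dd lam mu (p : R -> nat -> R) m s := sum_f_R0 (pistar (lam/mu)) m - sum_f_R0 (p s) m.
Definition cc lam mu m := lam + INR (S m) * mu.
Definition Ee lam mu p m s := Dd lam mu p m s * exp (cc lam mu m * s).

Lemma Dd_deriv lam mu tau p m s : is_marginal_law lam mu tau p -> 0 < s ->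
  is_derive (Dd lam mu p m) s (lam * p s m - INR (S m) * mu * (1 - sum_f_R0 (p s) m)).
Proof.
  intros [H0 [H1 [H2 [H3 H4]]]] Hs.
  unfold Dd. eapply is_derive_eq.
  - apply (d_plus (fun _ => sum_f_R0 (pistar (lam / mu)) m) (fun s => - sum_f_R0 (p s) m)).
    + apply d_const.
    + apply d_opp. apply deriv_sum. intros j. apply H4. exact Hs.
  - rewrite fwd_sum; [ring|]. apply H2; lra.
Qed.

Lemma Ee_deriv0 lam mu tau p s : 0 < lam -> 0 < mu -> is_marginal_law lam mu tau p -> 0 < s ->
  is_derive (Ee lam mu p 0) s 0.
Proof.
  intros Hl Hm HM Hs. unfold Ee. eapply is_derive_eq.
  - apply d_mult; [apply (Dd_deriv lam mu tau p 0 s HM Hs)|apply d_expc].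
  - pose proof (pistar_stat lam mu 0 Hl Hm). unfold Dd, cc. simpl sum_f_R0 in *.
    simpl INR in *. 
    match goal with |- ?a = ?b => transitivity ((lam * p s 0%nat - 1 * mu * (1 - p s 0%nat) + (lam + 1*mu) * (pistar (lam / mu) 0 - p s 0%nat)) * exp ((lam + 1 * mu) * s)) end.
    + ring.
    + replace (lam * p s 0%nat - 1 * mu * (1 - p s 0%nat) + (lam + 1*mu) * (pistar (lam / mu) 0 - p s 0%nat)) with 0 by lra. ring.
Qed.

Lemma Ee_derivS lam mu tau p m s : 0 < lam -> 0 < mu -> is_marginal_law lam mu tau p -> 0 < s ->
  is_derive (Ee lam mu p (S m)) s (lam * exp (mu * s) * Ee lam mu p m s).
Proof.
  intros Hl Hm HM Hs. unfold Ee. eapply is_derive_eq.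
  - apply d_mult; [apply (Dd_deriv lam mu tau p (S m) s HM Hs)|apply d_expc].
  - pose proof (pistar_stat lam mu (S m) Hl Hm). unfold Dd, cc in *.
    assert (E : exp ((lam + INR (S (S m)) * mu) * s) = exp (mu * s) * exp ((lam + INR (S m) * mu) * s)).
    { rewrite <- exp_plus. f_equal. rewrite (S_INR (S m)). ring. }
    rewrite E. simpl sum_f_R0 in *.
    set (K := INR (S (S m)) * mu) in *.
    set (e1 := exp (mu * s)). set (e2 := exp ((lam + INR (S m) * mu) * s)).
    set (Pm := sum_f_R0 (pistar (lam / mu)) m) in *. set (Gm := sum_f_R0 (p s) m).
    set (pi1 := pistar (lam / mu) (S m)) in *. set (p1 := p s (S m)).
    transitivity ((lam * p1 - K * (1 - (Gm + p1)) + (lam + K) * (Pm + pi1 - (Gm + p1))) * (e1 * e2)).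
    + ring.
    + replace (lam * p1 - K * (1 - (Gm + p1)) + (lam + K) * (Pm + pi1 - (Gm + p1))) with (lam * (Pm - Gm)).
      * ring.
      * assert (K * (Pm + pi1) = K * Pm + K * pi1) by ring. lra.
Qed.


Definition aa lam mu s := lam/mu * (exp (mu*s) - 1).
Definition Ww M lam mu m s := M * Pp m (aa lam mu s).

Lemma aa_deriv lam mu s : 0 < mu -> is_derive (aa lam mu) s (lam * exp (mu * s)).
Proof. intros Hm. unfold aa. auto_derive; auto. field. lra. Qed.

Lemma Ww_deriv0 M lam mu s : is_derive (Ww M lam mu 0) s 0.
Proof.
  unfold Ww. apply (d_ext (fun _ => M * 1)). { intros; unfold Pp; simpl; field. } apply d_const.
Qed.

Lemma Ww_derivS M lam mu m s : 0 < mu -> is_derive (Ww M lam mu (S m)) s (lam * exp (mu * s) * Ww M lam mu m s).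
Proof.
  intros Hm. unfold Ww. eapply is_derive_eq.
  - apply is_derive_scal. apply (is_derive_comp (Pp (S m)) (aa lam mu)); [apply Pp_derivS|apply aa_deriv; auto].
  - simpl. unfold scal; simpl; unfold mult; simpl. ring.
Qed.

Lemma Ww_cont M lam mu m : 0 < mu -> continuous (Ww M lam mu m) 0.
Proof.
  intros Hm. apply (ex_derive_continuous (K := R_AbsRing) (V := R_NormedModule)).
  destruct m; eexists; [apply Ww_deriv0|apply Ww_derivS; auto].
Qed.

Lemma Ww_at0 M lam mu m : Ww M lam mu m 0 = M.
Proof. unfold Ww, aa. rewrite Rmult_0_r, exp_0, Rminus_eq_0, Rmult_0_r, Pp0. ring. Qed.

Lemma Ee_at0 lam mu p m : Ee lam mu p m 0 = Dd lam mu p m 0.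
Proof. unfold Ee. rewrite Rmult_0_r, exp_0. ring. Qed.

Lemma Ee_rc lam mu tau p m : is_marginal_law lam mu tau p ->
  filterlim (Ee lam mu p m) (at_right 0) (locally (Ee lam mu p m 0)).
Proof.
  intros [H0 [H1 [H2 [H3 H4]]]]. unfold Ee, Dd.
  apply rc_mult.
  - apply rc_plus; [apply (rc_cont (fun _ => sum_f_R0 (pistar (lam / mu)) m)); apply continuous_const|].
    apply rc_opp. apply rc_sum. intros j. rewrite H0. apply H3.
  - apply (rc_cont (fun s => exp (cc lam mu m * s))).
    apply (ex_derive_continuous (K := R_AbsRing) (V := R_NormedModule)). eexists; apply d_expc.
Qed.

Lemma main_bound lam mu tau p M : 0 < lam -> 0 < mu -> is_marginal_law lam mu tau p ->
  (forall m, Rabs (Dd lam mu p m 0) <= M) ->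
  forall m s, 0 <= s -> Rabs (Ee lam mu p m s) <= Ww M lam mu m s.
Proof.
  intros Hl Hm HM HD m. induction m; intros s Hs.
  - assert (A1 : (fun s => Ww M lam mu 0 s - Ee lam mu p 0 s) 0 <= (fun s => Ww M lam mu 0 s - Ee lam mu p 0 s) s).
    { apply (mono0 (fun s => Ww M lam mu 0 s - Ee lam mu p 0 s)); auto.
      - intros u Hu. exists (0 - 0). split; [|lra].
        apply (is_derive_minus (Ww M lam mu 0) (Ee lam mu p 0)); [apply Ww_deriv0|eapply Ee_deriv0; eauto].
      - apply rc_plus; [apply rc_cont, Ww_cont; auto|apply rc_opp; eapply Ee_rc; eauto]. }
    assert (A2 : (fun s => Ww M lam mu 0 s + Ee lam mu p 0 s) 0 <= (fun s => Ww M lam mu 0 s + Ee lam mu p 0 s) s).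
    { apply (mono0 (fun s => Ww M lam mu 0 s + Ee lam mu p 0 s)); auto.
      - intros u Hu. exists (0 + 0). split; [|lra].
        apply (is_derive_plus (Ww M lam mu 0) (Ee lam mu p 0)); [apply Ww_deriv0|eapply Ee_deriv0; eauto].
      - apply rc_plus; [apply rc_cont, Ww_cont; auto|eapply Ee_rc; eauto]. }
    simpl in A1, A2. rewrite Ww_at0, Ee_at0 in A1, A2. pose proof (HD 0%nat).
    apply Rabs_le_between in H. apply Rabs_le. lra.
  - assert (A1 : (fun s => Ww M lam mu (S m) s - Ee lam mu p (S m) s) 0 <= (fun s => Ww M lam mu (S m) s - Ee lam mu p (S m) s) s).
    { apply (mono0 (fun s => Ww M lam mu (S m) s - Ee lam mu p (S m) s)); auto.
      - intros u Hu. exists (lam * exp (mu * u) * Ww M lam mu m u - lam * exp (mu * u) * Ee lam mu p m u). split.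
        + apply (is_derive_minus (Ww M lam mu (S m)) (Ee lam mu p (S m))); [apply Ww_derivS; auto|eapply Ee_derivS; eauto].
        + pose proof (IHm u ltac:(lra)). apply Rabs_le_between in H.
          pose proof (exp_pos (mu * u)). assert (0 < lam * exp (mu * u)) by (apply Rmult_lt_0_compat; lra).
          rewrite <- Rmult_minus_distr_l. apply Rmult_le_pos; lra.
      - apply rc_plus; [apply rc_cont, Ww_cont; auto|apply rc_opp; eapply Ee_rc; eauto]. }
    assert (A2 : (fun s => Ww M lam mu (S m) s + Ee lam mu p (S m) s) 0 <= (fun s => Ww M lam mu (S m) s + Ee lam mu p (S m) s) s).
    { apply (mono0 (fun s => Ww M lam mu (S m) s + Ee lam mu p (S m) s)); auto.
      - intros u Hu. exists (lam * exp (mu * u) * Ww M lam mu m u + lam * exp (mu * u) * Ee lam mu p m u). split.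
        + apply (is_derive_plus (Ww M lam mu (S m)) (Ee lam mu p (S m))); [apply Ww_derivS; auto|eapply Ee_derivS; eauto].
        + pose proof (IHm u ltac:(lra)). apply Rabs_le_between in H.
          pose proof (exp_pos (mu * u)). assert (0 < lam * exp (mu * u)) by (apply Rmult_lt_0_compat; lra).
          rewrite <- Rmult_plus_distr_l. apply Rmult_le_pos; lra.
      - apply rc_plus; [apply rc_cont, Ww_cont; auto|eapply Ee_rc; eauto]. }
    simpl in A1, A2. rewrite Ww_at0, Ee_at0 in A1, A2. pose proof (HD (S m)).
    apply Rabs_le_between in H. apply Rabs_le. lra.
Qed.


Lemma exp_nat n x : exp (INR n * x) = exp x ^ n.
Proof.
  induction n; [simpl; rewrite Rmult_0_l; apply exp_0|].
  rewrite S_INR, Rmult_plus_distr_r, exp_plus, IHn, Rmult_1_l. simpl. ring.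
Qed.

Lemma Pbound lam mu m t : 0 < lam -> 0 < mu -> 0 <= t ->
  Pp m (aa lam mu t) * exp (- (cc lam mu m) * t) <=
  exp (- mu * t - (lam / mu) * (exp (- mu * t) + mu * t - 1)).
Proof.
  intros Hl Hm Ht.
  set (z := exp (mu * t)).
  assert (Hz : 1 <= z). { unfold z. rewrite <- exp_0. destruct (Rle_lt_or_eq_dec 0 (mu*t)); [apply Rmult_le_pos; lra| |].
    - left; apply exp_increasing; auto.
    - rewrite <- e; lra. }
  assert (Hth : 0 < lam / mu) by (apply Rdiv_lt_0_compat; lra).
  set (y := lam / mu * (1 - / z)).
  assert (Hy : 0 <= y). { unfold y. apply Rmult_le_pos; [lra|]. assert (/ z <= 1). { rewrite <- Rinv_1. apply Rinv_le_contravar; lra. } lra. }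
  assert (Haa : aa lam mu t = z * y). { unfold aa, y. fold z. field. lra. }
  assert (H1 : Pp m (aa lam mu t) <= z ^ m * exp y).
  { rewrite Haa. apply Rle_trans with (z ^ m * Pp m y).
    - unfold Pp. rewrite scal_sum. apply sum_Rle. intros k Hk.
      rewrite Rpow_mult_distr. unfold Rdiv.
      assert (z ^ k <= z ^ m) by (apply Rle_pow; auto).
      assert (0 <= y ^ k) by (apply pow_le; auto).
      assert (0 < / INR (Factorial.fact k)) by (apply Rinv_0_lt_compat, INR_fact_lt_0).
      rewrite (Rmult_comm (z ^ k)). rewrite Rmult_assoc, (Rmult_comm (z ^ k)), <- Rmult_assoc.
      apply Rmult_le_compat_l; [apply Rmult_le_pos; lra|lra].
    - apply Rmult_le_compat_l; [apply pow_le; lra|]. apply exp_ge_taylor; auto. }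
  apply Rle_trans with (z ^ m * exp y * exp (- cc lam mu m * t)).
  - apply Rmult_le_compat_r; [left; apply exp_pos|auto].
  - right. unfold z. rewrite <- exp_nat, <- !exp_plus. f_equal.
    unfold y, z, cc. rewrite <- exp_Ropp. rewrite S_INR. replace (- (mu * t)) with (- mu * t) by ring. field. lra.
Qed.


Theorem mainTheorem5 (lam mu : R) (tau : nat -> R) (p : R -> nat -> R) (t : R) :
  0 < lam -> 0 < mu ->
  (forall n, 0 <= tau n) -> is_series tau 1 ->
  is_marginal_law lam mu tau p ->
  0 <= t ->
  Rbar_le
    (sup_dist (cdf (pistar (lam / mu))) (cdf (p t)))
    (Rbar_mult (sup_dist (cdf (pistar (lam / mu))) (cdf tau))
       (Finite (exp (- mu * t - (lam / mu) * (exp (- mu * t) + mu * t - 1))))).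
Proof.
  intros Hl Hm Htau Hs HM Ht.
  set (h := exp (- mu * t - (lam / mu) * (exp (- mu * t) + mu * t - 1))).
  assert (Hh : 0 < h) by apply exp_pos.
  unfold sup_dist.
  set (E0 := fun y => exists x : R, y = Rabs (cdf (pistar (lam / mu)) x - cdf tau x)).
  destruct (Lub_Rbar_correct E0) as [Hub _].
  destruct (Lub_Rbar E0) as [M| |] eqn:HE.
  - assert (HD : forall m, Rabs (Dd lam mu p m 0) <= M).
    { intros m. assert (A := Hub _ (ex_intro _ (INR m) eq_refl)). simpl in A.
      rewrite (cdf_nat _ _ m), (cdf_nat _ _ m) in A by lra.
      unfold Dd. rewrite (sum_ext (p 0) tau); auto. intros k _. destruct HM as [H0 _]. apply H0. }
    assert (HM0 : 0 <= M) by (pose proof (HD 0%nat); pose proof (Rabs_pos (Dd lam mu p 0 0)); lra).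
    simpl. destruct (Lub_Rbar_correct (fun y => exists x : R, y = Rabs (cdf (pistar (lam / mu)) x - cdf (p t) x))) as [_ Hl2].
    apply (Hl2 (Finite (M * h))).
    intros y [x ->]. simpl.
    destruct (Rlt_or_le x 0) as [Hx|Hx].
    + rewrite !cdf_neg by auto. rewrite Rminus_0_r, Rabs_R0. apply Rmult_le_pos; lra.
    + destruct (nfloor_ex x Hx) as [n Hn].
      rewrite (cdf_nat _ _ n), (cdf_nat _ _ n) by auto.
      change (sum_f_R0 (pistar (lam / mu)) n - sum_f_R0 (p t) n) with (Dd lam mu p n t).
      assert (ED : Dd lam mu p n t = Ee lam mu p n t * exp (- cc lam mu n * t)).
      { unfold Ee. rewrite Rmult_assoc, <- exp_plus. replace (cc lam mu n * t + - cc lam mu n * t) with 0 by ring.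
        rewrite exp_0; ring. }
      rewrite ED, Rabs_mult, (Rabs_right (exp _)) by (left; apply exp_pos).
      pose proof (main_bound lam mu tau p M Hl Hm HM HD n t Ht) as B.
      pose proof (Pbound lam mu n t Hl Hm Ht) as PB. fold h in PB.
      apply Rle_trans with (Ww M lam mu n t * exp (- cc lam mu n * t)).
      * apply Rmult_le_compat_r; [left; apply exp_pos|auto].
      * unfold Ww. rewrite Rmult_assoc. apply Rmult_le_compat_l; auto.
  - simpl. destruct (Rle_dec 0 h); [|lra]. destruct (Rle_lt_or_eq_dec 0 h r); [|lra].
    match goal with |- Rbar_le ?x _ => destruct x end; simpl; auto.
  - exfalso. assert (A := Hub _ (ex_intro _ 0 eq_refl)). simpl in A. exact A.
Qed.
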